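(* Let $(S,U,A,\{R(a)\}_{a\in\mathcal{A}})$ be a random tuple, where $S\in\mathcal{S}$ is an observed feature, $U\in\mathcal{U}$ is an unobserved feature, $A$ is an action taking values in a finite set $\mathcal{A}$, and $R(a)$ (integrable) is the potential reward had action $a$ been taken; the observed reward is $R=\sum_{a\in\mathcal{A}}R(a)\mathbb{I}(A=a)$. Suppose $A$ is generated by a behavior policy $\pi^b(\cdot\mid S,U)$ that may depend on both $S$ and $U$. Let $\pi^\ast$ be the standard optimal policy, $\pi^\ast(a^\ast\mid s)=1$ where $a^\ast=\operatorname{argmax}_{a\in\mathcal{A}}\mathbb{E}[R(a)\mid S=s]$ (assumed unique for every $s$), and let $\nu^\ast$ be the super-policy, $\nu^\ast(a^\ast\mid s,a')=1$ where $a^\ast=\operatorname{argmax}_{a\in\mathcal{A}}\mathbb{E}[R(a)\mid S=s,A=a']$, for all $(s,a')\in\mathcal{S}\times\mathcal{A}$. Then $$\mathcal{V}(\nu^\ast)\ \ge\ \max\{\mathcal{V}(\pi^b),\mathcal{V}(\pi^\ast)\}.$$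
   Context: The super-policy class is $\Omega=\{\nu:\mathcal{S}\times\mathcal{A}\to\mathcal{P}(\mathcal{A})\}$, where $\mathcal{P}(\mathcal{A})$ is the set of probability distributions on $\mathcal{A}$ and the second argument of $\nu$ is the action $A$ recommended by the behavior policy. For $\nu\in\Omega$, its value is $\mathcal{V}(\nu)=\sum_{a\in\mathcal{A}}\mathbb{E}[R(a)\nu(a\mid S,A)]$. For a policy $\pi:\mathcal{S}\to\mathcal{P}(\mathcal{A})$, $\mathcal{V}(\pi)=\sum_{a}\mathbb{E}[R(a)\pi(a\mid S)]$. The value of the behavior policy is $\mathcal{V}(\pi^b)=\mathbb{E}[R]=\sum_a\mathbb{E}[R(a)\mathbb{I}(A=a)]$. *)

(* Defs.v *)
From HB Require Import structures.
From mathcomp Require Import all_boot all_order all_algebra.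
From mathcomp Require Import all_classical all_reals all_analysis.
Set Implicit Arguments. Unset Strict Implicit. Unset Printing Implicit Defensive.
Import Order.TTheory GRing.Theory Num.Theory.
Local Open Scope classical_set_scope.
Local Open Scope ring_scope.

Section Defs.
Context {dO dS : measure_display} {Omega : measurableType dO}
  {T : measurableType dS} {R : realType} {Act : finType}.
Variable P : probability Omega R.

(* q is a version of E[X | S]: q(S) integrable, q measurable, and
   E[X 1{S in B}] = E[q(S) 1{S in B}] for every measurable B. *)
Definition is_cond_exp_S (S : Omega -> T) (X : Omega -> R) (q : T -> R) : Prop :=
  measurable_fun setT q /\ P.-integrable setT (EFin \o (q \o S)) /\
  forall B : set T, measurable B ->
    (\int[P]_(w in S @^-1` B) (X w)%:E = \int[P]_(w in S @^-1` B) (q (S w))%:E)%E.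

Definition is_cond_exp_SA (S : Omega -> T) (A : Omega -> Act) (X : Omega -> R)
  (g : T -> Act -> R) : Prop :=
  (forall a', measurable_fun setT (g^~ a')) /\
  P.-integrable setT (EFin \o (fun w => g (S w) (A w))) /\
  forall (B : set T) (a' : Act), measurable B ->
    (\int[P]_(w in S @^-1` B `&` A @^-1` [set a']) (X w)%:E =
     \int[P]_(w in S @^-1` B `&` A @^-1` [set a']) (g (S w) a')%:E)%E.

Definition value_super (S : Omega -> T) (A : Omega -> Act) (Rpot : Act -> Omega -> R)
  (nu : T -> Act -> Act -> R) : \bar R :=
  (\sum_(a : Act) \int[P]_w (Rpot a w * nu (S w) (A w) a)%:E)%E.

Definition value_policy (S : Omega -> T) (Rpot : Act -> Omega -> R)
  (pi : T -> Act -> R) : \bar R :=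
  (\sum_(a : Act) \int[P]_w (Rpot a w * pi (S w) a)%:E)%E.

Definition value_behavior (A : Omega -> Act) (Rpot : Act -> Omega -> R) : \bar R :=
  (\sum_(a : Act) \int[P]_w (Rpot a w * (A w == a)%:R)%:E)%E.
End Defs.

(* Main.v *)
Require Import Defs.
From HB Require Import structures.
From mathcomp Require Import all_boot all_order all_algebra.
From mathcomp Require Import all_classical all_reals all_analysis.
From mathcomp Require Import measurable_realfun.
Import Order.TTheory GRing.Theory Num.Theory.
Local Open Scope classical_set_scope.
Local Open Scope ring_scope.

Lemma mem_ind (T' : Type) (E : set T') (b : T' -> bool) :
  (forall w, E w <-> b w) -> forall w, (w \in E) = b w.
Proof. move=> h w; apply/idP/idP => [/set_mem/h //| /h]; exact: mem_set. Qed.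

Lemma intE d (X : measurableType d) (R : realType) (mu : {measure set X -> \bar R})
  (E : set X) (h : X -> R) :
 (\int[mu]_(w in E) (h w)%:E = \int[mu]_w (h w * (w \in E)%:R)%:E)%E.
Proof.
rewrite integral_mkcond; apply: eq_integral => w _; rewrite patchE.
by case: ifP => _; rewrite ?mulr1 ?mulr0.
Qed.

Lemma intI {d} {X : measurableType d} {R : realType} {mu : {measure set X -> \bar R}}
  {E : set X} {h : X -> R} : measurable E ->
  mu.-integrable setT (EFin \o h) ->
  mu.-integrable setT (fun w => (h w * (w \in E)%:R)%:E).
Proof.
move=> mE hi.
have := (integrable_mkcond _ mE).1 (integrableS measurableT mE (@subsetT _ _) hi).
apply: eq_integrable => // w _; rewrite patchE.
by case: ifP => _; rewrite ?mulr1 ?mulr0.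
Qed.

Lemma Kform (R : realType) (dO dS : measure_display)
  (Omega : measurableType dO) (T : measurableType dS)
  (Act : finType) (P : probability Omega R)
  (S : Omega -> T) (A : Omega -> Act) (Rpot : Act -> Omega -> R)
  (g : Act -> T -> Act -> R) (u : Act -> T -> Act) :
  measurable_fun setT S -> (forall a, measurable (A @^-1` [set a])) ->
  (forall a, P.-integrable setT (EFin \o Rpot a)) ->
  (forall a, is_cond_exp_SA P S A (Rpot a) (g a)) ->
  (forall a' a, measurable [set s | u a' s = a]) ->
  (\sum_(a : Act) \int[P]_w (Rpot a w * (a == u (A w) (S w))%:R)%:E =
   \sum_(a' : Act) \int[P]_w (g (u a' (S w)) (S w) a' * (A w == a')%:R)%:E)%E
  /\ forall a', P.-integrable setT
        (fun w => (g (u a' (S w)) (S w) a' * (A w == a')%:R)%:E).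
Proof.
move=> mS mA iR hg mu.
pose E a a' := S @^-1` [set s | u a' s = a] `&` A @^-1` [set a'].
have mE a a' : measurable (E a a').
  apply: measurableI => //; have := mS measurableT _ (mu a' a); by rewrite setTI.
have memE a a' w : (w \in E a a') = (A w == a') && (u a' (S w) == a).
  apply/idP/idP => [/set_mem [/= h1 h2]|/andP[/eqP h2 /eqP h1]].
    by rewrite h1 h2 !eqxx.
  by apply: mem_set; split.
have int1 a a' : P.-integrable setT
    (fun w => (Rpot a w * ((A w == a') && (u a' (S w) == a))%:R)%:E).
  apply: (eq_integrable measurableT _ _ _ (intI (mE a a') (iR a))) => w _.
  by rewrite memE.
have int2 a a' : P.-integrable setT
    (fun w => (g a (S w) a' * ((A w == a') && (u a' (S w) == a))%:R)%:E).
  apply: (eq_integrable measurableT _ _ _ (intI (mE a a') (hg a).2.1)) => w _.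
  rewrite memE /=; have [->|/negPf Hn] := eqVneq (A w) a'; by rewrite ?Hn ?mulr0.
have ce a a' : (\int[P]_w (Rpot a w * ((A w == a') && (u a' (S w) == a))%:R)%:E
   = \int[P]_w (g a (S w) a' * ((A w == a') && (u a' (S w) == a))%:R)%:E)%E.
  have H := (hg a).2.2 [set s | u a' s = a] a' (mu a' a).
  transitivity (\int[P]_w (Rpot a w * (w \in E a a')%:R)%:E)%E.
    by apply: eq_integral => w _; rewrite memE.
  rewrite -intE H intE.
  by apply: eq_integral => w _; rewrite memE.
have pw a' w : (\sum_(a : Act) g a (S w) a' * ((A w == a') && (u a' (S w) == a))%:R
    = g (u a' (S w)) (S w) a' * (A w == a')%:R).
  rewrite (bigD1 (u a' (S w))) //= eqxx andbT big1 ?addr0 // => a /negPf.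
  by rewrite eq_sym => ->; rewrite andbF mulr0.
have int3 a' : P.-integrable setT
        (fun w => (g (u a' (S w)) (S w) a' * (A w == a')%:R)%:E).
  apply: (eq_integrable measurableT _ _ _ (integrable_sum measurableT (index_enum Act) (fun a _ => int2 a a'))) => w _.
  rewrite sumEFin /=; congr EFin; rewrite -pw; apply: eq_bigr => a _ /=. by [].
split => //.
transitivity (\sum_(a : Act) \sum_(a' : Act)
   \int[P]_w (Rpot a w * ((A w == a') && (u a' (S w) == a))%:R)%:E)%E.
  apply: eq_bigr => a _; rewrite -(integral_sum measurableT) //; apply: eq_integral => w _.
  rewrite sumEFin; congr EFin; rewrite (bigD1 (A w)) //= eqxx andTb big1 ?addr0.
    by rewrite eq_sym.
  by move=> a'; rewrite eq_sym => /negPf ->; rewrite mulr0.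
under eq_bigr do under eq_bigr do rewrite ce.
rewrite exchange_big /=; apply: eq_bigr => a' _; rewrite -(integral_sum measurableT) //.
by apply: eq_integral => w _; rewrite sumEFin pw.
Qed.

Theorem lemma1 (R : realType) (dO dS dU : measure_display)
  (Omega : measurableType dO) (T : measurableType dS) (TU : measurableType dU)
  (Act : finType) (P : probability Omega R)
  (S : Omega -> T) (U : Omega -> TU) (A : Omega -> Act) (Rpot : Act -> Omega -> R)
  (q : Act -> T -> R) (g : Act -> T -> Act -> R)
  (astar_pi : T -> Act) (astar_nu : T -> Act -> Act) :
  measurable_fun setT S -> measurable_fun setT U ->
  (forall a, measurable (A @^-1` [set a])) ->
  (forall a, P.-integrable setT (EFin \o Rpot a)) ->
  (* q a is a version of E[R(a) | S = .] *)
  (forall a, is_cond_exp_S P S (Rpot a) (q a)) ->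
  (* g a is a version of E[R(a) | S = ., A = .] *)
  (forall a, is_cond_exp_SA P S A (Rpot a) (g a)) ->
  (* astar_pi s is the unique argmax of a |-> E[R(a) | S = s] *)
  (forall s a, a != astar_pi s -> q a s < q (astar_pi s) s) ->
  (* astar_nu s a' is an argmax of a |-> E[R(a) | S = s, A = a'] *)
  (forall s a' a, g a s a' <= g (astar_nu s a') s a') ->
  (forall a' a, measurable [set s | astar_nu s a' = a]) ->
  let nu_star := fun s a' a => ((a == astar_nu s a')%:R : R) in
  let pi_star := fun s a => ((a == astar_pi s)%:R : R) in
  (maxe (value_behavior P A Rpot) (value_policy P S Rpot pi_star)
     <= value_super P S A Rpot nu_star)%E.
Proof.
move=> mS mU mA iR hq hg hpi hnu mnu; cbv zeta.
have [Knu Inu] := Kform _ _ _ _ _ _ P S A Rpot g (fun a' s => astar_nu s a') mS mA iR hg mnu.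
have mb : forall a' a : Act, measurable [set _ : T | a' = a].
  move=> a' a; case: (pselect (a' = a)) => h.
    by rewrite (_ : [set _ | _] = setT) //; apply/seteqP; split.
  by rewrite (_ : [set _ | _] = set0) //; apply/seteqP; split.
have [Kb Ib] := Kform _ _ _ _ _ _ P S A Rpot g (fun a' _ => a') mS mA iR hg mb.
have mp : forall a' a : Act, measurable [set s : T | astar_pi s = a].
  move=> _ a.
  rewrite (_ : [set _ | _] = \bigcap_(b in [set x | (x \in index_enum Act) && (x != a)])
      [set s | q b s < q a s]); last first.
    apply/seteqP; split => s /=.
      by move=> <- b /andP[_ hb]; exact: hpi.
    move=> H; case: (eqVneq (astar_pi s) a) => // ne.
    have h1 := H (astar_pi s) ltac:(by rewrite /= mem_index_enum ne).
    have h2 := hpi s a ltac:(by rewrite eq_sym).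
    by move: (lt_trans h1 h2); rewrite ltxx.
  rewrite bigcap_seq_cond; apply: bigsetI_measurable => b _.
  have := @measurable_lte _ _ R setT measurableT (EFin \o q b) (EFin \o q a).
  rewrite setTI; under eq_set do rewrite /= lte_fin; apply.
    exact/measurable_EFinP/(hq b).1.
  exact/measurable_EFinP/(hq a).1.
have [Kpi Ipi] := Kform _ _ _ _ _ _ P S A Rpot g (fun _ s => astar_pi s) mS mA iR hg mp.
have -> : value_super P S A Rpot (fun s a' a => ((a == astar_nu s a')%:R : R)) =
  (\sum_(a' : Act) \int[P]_w (g (astar_nu (S w) a') (S w) a' * (A w == a')%:R)%:E)%E.
  by rewrite -Knu.
have -> : value_policy P S Rpot (fun s a => ((a == astar_pi s)%:R : R)) =
  (\sum_(a' : Act) \int[P]_w (g (astar_pi (S w)) (S w) a' * (A w == a')%:R)%:E)%E.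
  by rewrite -Kpi.
have -> : value_behavior P A Rpot =
  (\sum_(a' : Act) \int[P]_w (g a' (S w) a' * (A w == a')%:R)%:E)%E.
  rewrite -Kb; apply: eq_bigr => a _; apply: eq_integral => w _.
  by rewrite eq_sym.
rewrite ge_max; apply/andP; split; apply: lee_sum => a' _;
  apply: (le_integral measurableT) => // w _; rewrite lee_fin;
  apply: ler_wpM2r => //; exact: hnu.
Qed.
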